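(* Let $P$ be a convex polygon, let $\mathcal{R}$ be the smallest axis-parallel rectangle containing $P$, with side lengths $L\ge W>0$, and let $r=\frac14\sqrt{L^2+4W^2}$. Suppose that two vertices of $P$ coincide with two opposite (non-adjacent) corners of $\mathcal{R}$. Then $r\le 2\,r_{opt}(P)$.
   Context: For a compact set $X\subset\mathbb{R}^2$, $r_{opt}(X)$ denotes the minimum $r$ such that two closed disks of radius $r$ have union containing $X$. The number $r$ is the radius of the two congruent disks circumscribing the two halves $\frac L2\times W$ of $\mathcal{R}$. *)

(* Defs.v *)
From Stdlib Require Import Reals Lra List.
Open Scope R_scope.

Definition point := (R * R)%type.

Definition dist2 (p q : point) : R :=
  sqrt ((fst p - fst q) ^ 2 + (snd p - snd q) ^ 2).

Fixpoint wsum (w : list R) (vs : list point) : point :=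
  match w, vs with
  | a :: w', v :: vs' =>
      let s := wsum w' vs' in (a * fst v + fst s, a * snd v + snd s)
  | _, _ => (0, 0)
  end.

(* The convex polygon P = conv(vs): convex hull of a finite list of points. *)
Definition in_hull (vs : list point) (p : point) : Prop :=
  exists w : list R,
    length w = length vs /\ Forall (fun a => 0 <= a) w /\
    fold_right Rplus 0 w = 1 /\ p = wsum w vs.

Definition in_rect (x0 x1 y0 y1 : R) (p : point) : Prop :=
  x0 <= fst p <= x1 /\ y0 <= snd p <= y1.

Definition is_bounding_box (S : point -> Prop) (x0 x1 y0 y1 : R) : Prop :=
  (forall p, S p -> in_rect x0 x1 y0 y1 p) /\
  (forall a0 a1 b0 b1, (forall p, S p -> in_rect a0 a1 b0 b1 p) ->
     forall p, in_rect x0 x1 y0 y1 p -> in_rect a0 a1 b0 b1 p).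

Definition two_disk_cover (S : point -> Prop) (r : R) : Prop :=
  exists c1 c2 : point, forall p, S p -> dist2 p c1 <= r \/ dist2 p c2 <= r.

Definition is_vertex (S : point -> Prop) (v : point) : Prop :=
  S v /\ forall p q t, S p -> S q -> 0 < t < 1 ->
    v = (t * fst p + (1 - t) * fst q, t * snd p + (1 - t) * snd q) -> p = v /\ q = v.

(* Main.v *)
Require Import Defs.
From Stdlib Require Import Reals List Lra Psatz.
Open Scope R_scope.

Fixpoint mid (w1 w2 : list R) : list R :=
  match w1, w2 with a :: t, b :: u => (a/2 + b/2) :: mid t u | _, _ => nil end.

Lemma mid_props (vs : list point) : forall w1 w2,
  length w1 = length vs -> length w2 = length vs ->
  Forall (fun a => 0 <= a) w1 -> Forall (fun a => 0 <= a) w2 ->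
  length (mid w1 w2) = length vs /\ Forall (fun a => 0 <= a) (mid w1 w2) /\
  fold_right Rplus 0 (mid w1 w2) = fold_right Rplus 0 w1 / 2 + fold_right Rplus 0 w2 / 2 /\
  wsum (mid w1 w2) vs = ((fst (wsum w1 vs) + fst (wsum w2 vs)) / 2,
                         (snd (wsum w1 vs) + snd (wsum w2 vs)) / 2).
Proof.
  induction vs as [|v vs IH]; intros [|a w1] [|b w2]; simpl; intros H1 H2 F1 F2;
    try discriminate.
  - repeat split; try constructor; try lra; f_equal; lra.
  - injection H1; injection H2; intros E2 E1.
    inversion F1; inversion F2; subst.
    destruct (IH w1 w2 E1 E2 H4 H8) as (L & F & S & Wq).
    rewrite L, S, Wq; simpl.
    repeat split; try constructor; auto; try lra.
    f_equal; lra.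
Qed.

Lemma hull_mid vs p q : in_hull vs p -> in_hull vs q ->
  in_hull vs ((fst p + fst q)/2, (snd p + snd q)/2).
Proof.
  intros (w1 & L1 & F1 & S1 & E1) (w2 & L2 & F2 & S2 & E2).
  destruct (mid_props vs w1 w2 L1 L2 F1 F2) as (L & F & S & Wq).
  exists (mid w1 w2); repeat split; auto.
  - rewrite S, S1, S2; lra.
  - rewrite Wq, E1, E2; reflexivity.
Qed.

Lemma pair_bound p q c r : dist2 p c <= r -> dist2 q c <= r ->
  (fst p - fst q)^2 + (snd p - snd q)^2 <= 4 * r^2.
Proof.
  unfold dist2; intros Hp Hq.
  set (a := (fst p - fst c) ^ 2 + (snd p - snd c) ^ 2) in *.
  set (b := (fst q - fst c) ^ 2 + (snd q - snd c) ^ 2) in *.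
  assert (Ha : 0 <= a) by (unfold a; apply Rplus_le_le_0_compat; apply pow2_ge_0).
  assert (Hb : 0 <= b) by (unfold b; apply Rplus_le_le_0_compat; apply pow2_ge_0).
  pose proof (sqrt_sqrt a Ha). pose proof (sqrt_sqrt b Hb).
  pose proof (sqrt_pos a). pose proof (sqrt_pos b).
  assert (Ka : a <= r^2).
  { rewrite <- H. simpl. rewrite Rmult_1_r. apply Rmult_le_compat; lra. }
  assert (Kb : b <= r^2).
  { rewrite <- H0. simpl. rewrite Rmult_1_r. apply Rmult_le_compat; lra. }
  clear H H0 H1 H2 Hp Hq.
  unfold a, b in *.
  destruct p as [p1 p2]; destruct q as [q1 q2]; destruct c as [c1 c2]; simpl in *.
  assert (T : (p1 - q1) ^ 2 + (p2 - q2) ^ 2 <=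
    2 * ((p1 - c1) ^ 2 + (p2 - c2) ^ 2) + 2 * ((q1 - c1) ^ 2 + (q2 - c2) ^ 2)).
  { assert (0 <= (p1 + q1 - 2*c1)^2 + (p2 + q2 - 2*c2)^2)
      by (apply Rplus_le_le_0_compat; apply pow2_ge_0). lra. }
  lra.
Qed.

Lemma key (vs : list point) (A B : point) r :
  in_hull vs A -> in_hull vs B -> two_disk_cover (in_hull vs) r ->
  (fst A - fst B)^2 + (snd A - snd B)^2 <= 16 * r^2 /\ 0 <= r.
Proof.
  intros HA HB (c1 & c2 & Hc).
  pose proof (hull_mid vs A B HA HB) as HM.
  set (M := ((fst A + fst B)/2, (snd A + snd B)/2)) in *.
  assert (r0 : 0 <= r).
  { destruct (Hc A HA) as [H|H]; eapply Rle_trans; try exact H; apply sqrt_pos. }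
  split; auto.
  destruct (Hc A HA) as [a|a]; destruct (Hc B HB) as [b|b]; destruct (Hc M HM) as [m|m];
  first [ pose proof (pair_bound _ _ _ _ a b) as K
        | pose proof (pair_bound _ _ _ _ a m) as K
        | pose proof (pair_bound _ _ _ _ b m) as K ];
  unfold M in K; simpl in K; nra.
Qed.

Theorem lemma3 (vs : list point) (x0 x1 y0 y1 : R) :
  vs <> nil ->
  is_bounding_box (in_hull vs) x0 x1 y0 y1 ->
  let L := Rmax (x1 - x0) (y1 - y0) in
  let W := Rmin (x1 - x0) (y1 - y0) in
  0 < W ->
  ((is_vertex (in_hull vs) (x0, y0) /\ is_vertex (in_hull vs) (x1, y1)) \/
   (is_vertex (in_hull vs) (x0, y1) /\ is_vertex (in_hull vs) (x1, y0))) ->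
  forall ropt : R, two_disk_cover (in_hull vs) ropt ->
  / 4 * sqrt (L ^ 2 + 4 * W ^ 2) <= 2 * ropt.
Proof.
  intros _ _ L W HW Hv r Hc.
  assert (HD : (x1 - x0)^2 + (y1 - y0)^2 <= 16 * r^2 /\ 0 <= r).
  { destruct Hv as [[[HA _] [HB _]] | [[HA _] [HB _]]].
    - pose proof (key vs _ _ r HA HB Hc) as K; simpl in K; nra.
    - pose proof (key vs _ _ r HA HB Hc) as K; simpl in K; nra. }
  destruct HD as [HD r0].
  assert (E : L^2 + W^2 = (x1 - x0)^2 + (y1 - y0)^2).
  { unfold L, W, Rmax, Rmin; destruct (Rle_dec (x1 - x0) (y1 - y0)); ring. }
  assert (Hs : sqrt (L ^ 2 + 4 * W ^ 2) <= sqrt ((8*r)^2)).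
  { apply sqrt_le_1_alt. nra. }
  rewrite sqrt_pow2 in Hs by lra. lra.
Qed.
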